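(* Let $B=\begin{pmatrix}g_1&g_2\\-\Phi\overline{g_2}&\overline{g_1}\end{pmatrix}\in\mathrm{GL}(2,\mathbb{Q}[t,t^{-1}])$ with $g_2\neq0$. Then there exists a unique balanced matrix among the matrices $\{B\,g[0]^k : k\in\mathbb{Z}\}$, where $g[0]=\begin{pmatrix}t&0\\0&t^{-1}\end{pmatrix}$.
   Context: For $f\in\mathbb{Q}[t,t^{-1}]$, $\overline{f}(t)=f(t^{-1})$, and $\Phi=1+t^{-1}+t$. For a matrix $B=\begin{pmatrix}g_1&g_2\\-\Phi\overline{g_2}&\overline{g_1}\end{pmatrix}\in\mathrm{GL}(2,\mathbb{Q}[t,t^{-1}])$ with $g_2\neq0$, write $g_1=a_0t^{m_1}+\dots+a_{n_1-m_1}t^{n_1}$ and $g_2=b_0t^{m_2}+\dots+b_{n_2-m_2}t^{n_2}$ with $a_0,a_{n_1-m_1},b_0,b_{n_2-m_2}\neq0$. $B$ is upper-balanced if $m_1=m_2$ and $n_1=n_2+1$, lower-balanced if $m_1=m_2-1$ and $n_1=n_2$, and balanced if it is upper- or lower-balanced. *)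

(* Defs.v *)
(* The ring Q[t,t^{-1}] is modelled as the subring of the
   rational function field Q(t) = {fraction {poly rat}} consisting of the
   elements p(t) / t^n. *)
From HB Require Import structures.
From mathcomp Require Import all_boot all_order all_algebra.
From mathcomp Require Import generic_quotient fraction.
Set Implicit Arguments.
Unset Strict Implicit.
Unset Printing Implicit Defensive.
Import Order.TTheory GRing.Theory Num.Theory.
Local Open Scope ring_scope.

Definition Qt : Type := {fraction {poly rat}}.

Definition toQt (p : {poly rat}) : Qt := @FracField.tofrac _ p.

Definition T : Qt := toQt 'X.

Definition cst (c : rat) : Qt := toQt c%:P.

Definition laurent (f : Qt) : Prop :=
  exists (p : {poly rat}) (n : nat), f = toQt p / T ^+ n.

Definition peval_inv (p : {poly rat}) : Qt :=
  \sum_(i < size p) cst p`_i * T ^- i.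

(* The involution t |-> t^{-1} of Q(t) (restricting to f |-> \overline f on
   Q[t,t^{-1}]), computed on a representative numerator/denominator pair. *)
Definition bar (f : Qt) : Qt :=
  let r := repr f in peval_inv (frac r).1 / peval_inv (frac r).2.

Definition Phi : Qt := 1 + T^-1 + T.

Definition lspan (f : Qt) (m n : int) : Prop :=
  m <= n /\ exists a : nat -> rat,
    [/\ a 0%N != 0, a `|n - m|%N != 0 &
        f = \sum_(i < `|n - m|%N.+1) cst (a i) * T ^ (m + (i : nat)%:Z)].

Definition GL2L (M : 'M[Qt]_2) : Prop :=
  (forall i j, laurent (M i j)) /\ M \in unitmx /\
  (forall i j, laurent (invmx M i j)).

Definition Bmat (g1 g2 : Qt) : 'M[Qt]_2 :=
  \matrix_(i < 2, j < 2)
    if i == 0 then (if j == 0 then g1 else g2)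
    else (if j == 0 then - (Phi * bar g2) else bar g1).

Definition g0 : 'M[Qt]_2 :=
  \matrix_(i < 2, j < 2) if i == j then (if i == 0 then T else T^-1) else 0.

(* Balancedness, read off the entries g1 = M 0 0 and g2 = M 0 1. *)
Definition upper_balanced (M : 'M[Qt]_2) : Prop :=
  exists m1 n1 m2 n2, [/\ lspan (M 0 0) m1 n1, lspan (M 0 1) m2 n2,
                          m1 = m2 & n1 = n2 + 1].
Definition lower_balanced (M : 'M[Qt]_2) : Prop :=
  exists m1 n1 m2 n2, [/\ lspan (M 0 0) m1 n1, lspan (M 0 1) m2 n2,
                          m1 = m2 - 1 & n1 = n2].
Definition balanced (M : 'M[Qt]_2) : Prop :=
  upper_balanced M \/ lower_balanced M.

(* Main.v *)
Require Import Defs.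
From HB Require Import structures.
From mathcomp Require Import all_boot all_order all_algebra.
From mathcomp Require Import generic_quotient fraction.
From mathcomp Require Import zify ring.
Import Order.TTheory GRing.Theory Num.Theory.
Local Open Scope ring_scope.

Lemma T_neq0 : T != 0.
Proof. by rewrite /T /toQt tofrac_eq0 polyX_eq0. Qed.

Lemma toQt_inj : injective toQt.
Proof. by move=> p q /eqP; rewrite /toQt tofrac_eq => /eqP. Qed.

Lemma toQtD p q : toQt (p + q) = toQt p + toQt q.
Proof. exact: rmorphD. Qed.
Lemma toQtM p q : toQt (p * q) = toQt p * toQt q.
Proof. exact: rmorphM. Qed.
Lemma toQtN p : toQt (- p) = - toQt p.
Proof. exact: rmorphN. Qed.
Lemma toQt1 : toQt 1 = 1.
Proof. exact: rmorph1. Qed.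
Lemma toQtXn n : toQt 'X^n = T ^+ n.
Proof. exact: rmorphXn. Qed.
Lemma toQtZ c p : toQt (c *: p) = cst c * toQt p.
Proof. by rewrite -mul_polyC toQtM. Qed.

Lemma toQt_sum (I : Type) (r : seq I) (P : pred I) (F : I -> {poly rat}) :
  toQt (\sum_(i <- r | P i) F i) = \sum_(i <- r | P i) toQt (F i).
Proof. exact: rmorph_sum. Qed.

Definition NF (f : Qt) (m : int) (P : {poly rat}) := f = toQt P * T ^ m /\ P`_0 != 0.

Lemma NF_neq0 {P : {poly rat}} : P`_0 != 0 -> P != 0.
Proof. by apply: contra => /eqP ->; rewrite coef0. Qed.

Lemma TzD (a b : int) : T ^ (a + b) = T ^ a * T ^ b.
Proof. exact: expfzDr T_neq0. Qed.

Lemma NF_uniq {f m P m' P'} : NF f m P -> NF f m' P' -> m = m' /\ P = P'.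
Proof.
wlog le : m m' P P' / m <= m'.
  move=> W h1 h2; case: (lerP m m') => [le|/ltW le]; first exact: W h1 h2.
  by have [-> ->] := W _ _ _ _ le h2 h1.
move=> [-> h0] [e h0'].
have [e' Em] : exists e : nat, m' = m + e%:Z.
  by exists `|m' - m|%N; lia.
move: e; rewrite Em TzD -exprnP mulrA mulrAC -toQtXn -toQtM => /(mulIf (expfz_neq0 _ T_neq0)).
move=> /toQt_inj HP; subst P.
move: h0; rewrite coefMXn; case: e' {Em} => [_|e' ]; last by rewrite ltn0Sn eqxx.
by rewrite addr0 expr0 mulr1.
Qed.

Lemma poly_factor (p : {poly rat}) : p != 0 -> exists v P, p = P * 'X^v /\ P`_0 != 0.
Proof.
move: {2}(size p) (leqnn (size p)) => n; elim: n p => [|n IH] p.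
  by rewrite leqn0 size_poly_eq0 => ->.
move=> hs p0; case: (eqVneq p`_0 0) => h0; last by exists 0%N, p; rewrite expr0 mulr1.
have hp := poly_take_drop 1 p.
have ht : take_poly 1 p = 0.
  apply/polyP => i; rewrite coef_take_poly coef0; case: i => //.
have hd0 : drop_poly 1 p != 0.
  by apply: contra p0 => /eqP hd; rewrite -hp ht hd mul0r add0r.
have [|v [P [hP hP0]]] := IH (drop_poly 1 p) _ hd0.
  rewrite size_drop_poly; move: hs; case: (size p) => //= k; lia.
exists v.+1, P; split => //.
by rewrite -hp ht add0r hP expr1 exprS -mulrA [_ * 'X]mulrC.
Qed.

Lemma laurent_NF {f} : laurent f -> f != 0 -> exists m P, NF f m P.
Proof.
move=> [p [n ->]] f0.
have p0 : p != 0 by apply: contra f0 => /eqP ->; rewrite /toQt rmorph0 mul0r.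
have [v [P [-> hP0]]] := @poly_factor p p0.
exists (v%:Z - n%:Z), P; split => //.
by rewrite toQtM toQtXn TzD -mulrA exprnP -exprnN.
Qed.

Lemma toQt_poly k (a : nat -> rat) (m : int) :
  toQt (\poly_(i < k) a i) * T ^ m = \sum_(i < k) cst (a i) * T ^ (m + (i : nat)%:Z).
Proof.
rewrite poly_def toQt_sum mulr_suml; apply: eq_bigr => i _.
by rewrite toQtZ toQtXn TzD -exprnP mulrAC mulrA.
Qed.

Lemma lspan_NF f m n : lspan f m n -> exists P, NF f m P /\ n = m + ((size P).-1)%:Z.
Proof.
move=> [le [a [a0 aN ->]]].
exists (\poly_(i < `|n - m|%N.+1) a i).
have sz : size (\poly_(i < `|n - m|%N.+1) a i) = `|n - m|%N.+1 by rewrite size_poly_eq.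
split; [split|]; first by rewrite toQt_poly.
  by rewrite coef_poly.
rewrite sz /=; lia.
Qed.

Lemma NF_lspan {f m P} : NF f m P -> lspan f m (m + ((size P).-1)%:Z).
Proof.
move=> [-> h0]; have P0 := @NF_neq0 P h0.
have sP : size P = ((size P).-1).+1 by rewrite prednK // lt0n size_poly_eq0.
have eN : absz (m + ((size P).-1)%:Z - m)%R = (size P).-1 by lia.
split; first lia.
exists (fun i => P`_i); rewrite eN; split => //.
  by rewrite -lead_coefE lead_coef_eq0.
by rewrite -toQt_poly -sP coefK.
Qed.

Lemma lspan_char {f m P m' n'} : NF f m P -> lspan f m' n' ->
  m' = m /\ n' = m + ((size P).-1)%:Z.
Proof.
move=> h /lspan_NF [P' [h' ->]]; by have [-> <-] := NF_uniq h' h.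
Qed.

Local Open Scope quotient_scope.

Lemma pi_frac (r : {ratio {poly rat}}) :
  (\pi_Qt r : Qt) = toQt (frac r).1 / toQt (frac r).2.
Proof.
have d0 := denom_ratioP r.
have t0 : toQt (frac r).2 != 0 by rewrite /toQt tofrac_eq0.
apply: (mulIf t0); rewrite mulfVK //.
rewrite /toQt; unlock FracField.tofrac.
rewrite -[_ * _]/(FracField.mul _ _) -FracField.pi_mul.
apply/eqmodP; rewrite /= FracField.equivfE /FracField.mulf !numden_Ratio ?oner_eq0 ?mulf_neq0 ?oner_eq0 //.
by rewrite !mulr1 mulrC.
Qed.

Local Close Scope quotient_scope.

Definition cstf : rat -> Qt := (@FracField.tofrac _) \o polyC.

Lemma pinvE p : peval_inv p = (map_poly cstf p).[T^-1].
Proof.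
rewrite horner_coef size_map_poly /peval_inv; apply: eq_bigr => i _.
by rewrite coef_map exprVn.
Qed.

Lemma pinvM p q : peval_inv (p * q) = peval_inv p * peval_inv q.
Proof. by rewrite !pinvE rmorphM hornerM. Qed.

Lemma pinv1 : peval_inv 1 = 1.
Proof. by rewrite !pinvE rmorph1 hornerC. Qed.

Lemma pinvXn n : peval_inv 'X^n = T ^ (- n%:Z).
Proof. by rewrite !pinvE map_polyXn hornerXn exprVn exprnN. Qed.

Definition revp (p : {poly rat}) := \poly_(i < size p) p`_((size p).-1 - i).

Lemma revpE p : peval_inv p * T ^+ (size p).-1 = toQt (revp p).
Proof.
rewrite /revp poly_def toQt_sum /peval_inv mulr_suml.
rewrite (reindex_inj rev_ord_inj) /=; apply: eq_bigr => i _.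
have hi := ltn_ord i.
rewrite toQtZ toQtXn /= (_ : ((size p).-1 - i)%N = (size p - i.+1)%N); last by rewrite -subn1; lia.
rewrite -mulrA; congr (_ * _).
rewrite (_ : (size p).-1 = ((size p - i.+1) + i)%N); last by move: hi; set s := size p; rewrite -subn1; lia.
by rewrite exprD mulKf // expf_neq0 // T_neq0.
Qed.

Lemma revp0 {p : {poly rat}} : p != 0 -> (revp p)`_0 = lead_coef p.
Proof. by move=> p0; rewrite coef_poly lt0n size_poly_eq0 p0 subn0 lead_coefE. Qed.

Lemma size_revp {p : {poly rat}} : p`_0 != 0 -> size (revp p) = size p.
Proof. by move=> h; rewrite size_poly_eq // subnn. Qed.

Lemma pinv_rev P : peval_inv P = toQt (revp P) * T ^ (- ((size P).-1)%:Z).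
Proof.
by rewrite -revpE -exprnN mulfK // expf_neq0 // T_neq0.
Qed.

Lemma pinv_neq0 {p : {poly rat}} : p != 0 -> peval_inv p != 0.
Proof.
move=> p0; rewrite pinv_rev mulf_neq0 ?(expfz_neq0 _ T_neq0) //.
rewrite /toQt tofrac_eq0; apply/eqP => h.
by have := revp0 p0; rewrite h coef0 => /esym/eqP; rewrite lead_coef_eq0 (negbTE p0).
Qed.

Lemma bar_frac (p q : {poly rat}) : q != 0 -> bar (toQt p / toQt q) = peval_inv p / peval_inv q.
Proof.
move=> q0; rewrite /bar.
have hr := pi_frac (repr (toQt p / toQt q)); rewrite reprK in hr.
move: hr; set r := repr _ => hr.
have d0 := denom_ratioP r.
have tq : toQt q != 0 by rewrite /toQt tofrac_eq0.
have tr : toQt (frac r).2 != 0 by rewrite /toQt tofrac_eq0.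
have h : p * (frac r).2 = (frac r).1 * q.
  apply: toQt_inj; rewrite !toQtM; apply/eqP; rewrite -(eqr_div _ _ tq tr); exact/eqP.
move/(congr1 peval_inv): h; rewrite !pinvM => h.
apply/eqP; rewrite (eqr_div _ _ (pinv_neq0 d0) (pinv_neq0 q0)); apply/eqP; by rewrite -h.
Qed.

Lemma Xn_neq0 n : ('X^n : {poly rat}) != 0.
Proof. by rewrite expf_eq0 polyX_eq0 andbF. Qed.

Lemma Tz_neq0 (k : int) : T ^ k != 0.
Proof. exact: expfz_neq0 T_neq0. Qed.

Lemma bar_NF (P : {poly rat}) (m : int) : P`_0 != 0 ->
  bar (toQt P * T ^ m) = toQt (revp P) * T ^ (- m - ((size P).-1)%:Z).
Proof.
move=> h0; have P0 := @NF_neq0 P h0.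
case: m => [a|n].
- have -> : toQt P * T ^ (Posz a) = toQt (P * 'X^a) / toQt 1.
    by rewrite toQt1 divr1 toQtM toQtXn exprnP.
  rewrite bar_frac ?oner_neq0 // pinvM pinvXn pinv1 divr1 pinv_rev -mulrA -TzD.
  congr (_ * T ^ _); move: ((size P).-1) => s; lia.
- have -> : toQt P * T ^ (Negz n) = toQt P / toQt 'X^(n.+1).
    by rewrite toQtXn NegzE -exprnN.
  rewrite (bar_frac _ _ (Xn_neq0 _)) pinvXn pinv_rev invr_expz -mulrA -TzD.
  congr (_ * T ^ _); rewrite NegzE; move: ((size P).-1) => s; lia.
Qed.

Lemma Phi_E : Phi = toQt ('X^2 + ('X + 1)) * T ^ (-1).
Proof.
rewrite /Phi !toQtD toQtXn toQt1 -/T exprN1.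
have := T_neq0; move: T => t t0.
by rewrite !mulrDl expr2 mulfK // divff // mul1r addrC.
Qed.

Lemma NF_gbarg {g : Qt} {m : int} {P : {poly rat}} : NF g m P ->
  g * bar g = toQt (P * revp P) * T ^ (- ((size P).-1)%:Z).
Proof.
move=> [-> h0]; rewrite bar_NF // toQtM mulrACA -TzD.
congr (_ * T ^ _); lia.
Qed.

Definition Dm (k : int) : 'M[Qt]_2 :=
  \matrix_(i < 2, j < 2) if i == j then (if i == 0 then T ^ k else T ^ (- k)) else 0.

Lemma DmD a b : Dm a * Dm b = Dm (a + b).
Proof.
apply/matrixP => i j; rewrite !mxE !big_ord_recl big_ord0 !mxE.
case: i => [[|[|//]] hi]; case: j => [[|[|//]] hj]; rewrite /= ?mulr0 ?mul0r ?addr0 ?add0r ?TzD //.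
by rewrite opprD TzD.
Qed.

Lemma Dm0 : Dm 0 = 1.
Proof.
apply/matrixP => i j; rewrite !mxE.
by case: i => [[|[|//]] hi]; case: j => [[|[|//]] hj]; rewrite /= ?expr0z ?oppr0 ?expr0z.
Qed.

Lemma g0_Dm : g0 = Dm 1.
Proof.
apply/matrixP => i j; rewrite !mxE.
by case: i => [[|[|//]] hi]; case: j => [[|[|//]] hj]; rewrite /= ?expr1z ?exprN1.
Qed.

Lemma inv_eq_ring (R : unitRingType) (x y : R) : x * y = 1 -> y * x = 1 -> x^-1 = y.
Proof.
move=> h1 h2; have ux : x \is a GRing.unit by apply/unitrP; exists y.
by rewrite -[LHS]mulr1 -h1 mulKr.
Qed.

Lemma g0_pow (k : int) : g0 ^ k = Dm k.
Proof.
have hn : forall n : nat, g0 ^+ n = Dm n.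
  elim=> [|n IH]; first by rewrite expr0 Dm0.
  by rewrite exprS IH g0_Dm DmD; congr Dm; lia.
case: k => n; first by rewrite -exprnP hn.
rewrite NegzE -exprnN hn; apply: inv_eq_ring; rewrite DmD ?subrr ?addNr Dm0 //.
Qed.

Lemma Mk00 (A : 'M[Qt]_2) k : (A *m g0 ^ k) 0 0 = A 0 0 * T ^ k.
Proof.
by rewrite g0_pow !mxE !big_ord_recl big_ord0 !mxE /= mulr0 !addr0.
Qed.

Lemma Mk01 (A : 'M[Qt]_2) k : (A *m g0 ^ k) 0 1 = A 0 1 * T ^ (- k).
Proof.
rewrite g0_pow !mxE !big_ord_recl big_ord0 !mxE /= mulr0 add0r addr0.
by congr (A _ _ * _); apply: val_inj.
Qed.

Lemma det2 (A : 'M[Qt]_2) : \det A = A 0 0 * A 1 1 - A 0 1 * A 1 0.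
Proof.
rewrite (expand_det_row _ 0) !big_ord_recl big_ord0 /cofactor !det_mx11 !mxE /=.
have L1 : forall (i : 'I_1), lift (0 : 'I_2) i = 1 by move=> i; apply: val_inj; rewrite /= ord1.
have L0 : forall (i : 'I_1), lift (1 : 'I_2) i = 0 by move=> i; apply: val_inj; rewrite /= ord1.
by rewrite !L1 !L0 /= expr0 expr1 mul1r mulN1r mulrN addr0.
Qed.

Lemma Tn_neq0 n : T ^+ n != 0.
Proof. exact: expf_neq0 T_neq0. Qed.

Lemma laurentM f g : laurent f -> laurent g -> laurent (f * g).
Proof.
move=> [p [a ->]] [q [b ->]]; exists (p * q), (a + b)%N.
by rewrite mulf_div toQtM exprD.
Qed.

Lemma laurentD f g : laurent f -> laurent g -> laurent (f + g).
Proof.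
move=> [p [a ->]] [q [b ->]]; exists (p * 'X^b + q * 'X^a), (a + b)%N.
by rewrite addf_div ?Tn_neq0 // toQtD !toQtM !toQtXn exprD.
Qed.

Lemma laurentN f : laurent f -> laurent (- f).
Proof.
by move=> [p [a ->]]; exists (- p), a; rewrite toQtN mulNr.
Qed.

Lemma laurent_det {A : 'M[Qt]_2} : (forall i j, laurent (A i j)) -> laurent (\det A).
Proof.
move=> h; rewrite det2; apply: laurentD; last apply: laurentN; apply: laurentM; exact: h.
Qed.

Lemma unit_NF {u v} : laurent u -> laurent v -> u * v = 1 ->
  exists j P, NF u j P /\ size P = 1%N.
Proof.
move=> hu hv huv.
have u0 : u != 0 by apply/eqP => e; move: huv; rewrite e mul0r => /eqP; rewrite eq_sym oner_eq0.
have v0 : v != 0 by apply/eqP => e; move: huv; rewrite e mulr0 => /eqP; rewrite eq_sym oner_eq0.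
have [a [P [eu hP]]] := laurent_NF hu u0.
have [b [Q [ev hQ]]] := laurent_NF hv v0.
exists a, P; split => //.
have h1 : NF 1 0 1 by split; rewrite ?toQt1 ?expr0z ?mulr1 // coef1 oner_neq0.
have h2 : NF 1 (a + b) (P * Q).
  split; last by rewrite coef0M mulf_neq0.
  by rewrite -huv eu ev toQtM TzD mulrACA.
have [_ PQ] := NF_uniq h2 h1.
have := congr1 (fun p : {poly rat} => size p) PQ; rewrite /= size_mul ?(NF_neq0 hP) ?(NF_neq0 hQ) // size_poly1.
have := NF_neq0 hP; have := NF_neq0 hQ; rewrite -!size_poly_eq0.
move: (size P) (size Q) => s t; lia.
Qed.

Lemma size_mulXn' (V : {poly rat}) e : V != 0 -> size (V * 'X^e) = (size V + e)%N.
Proof.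
move=> V0; by rewrite size_mul ?Xn_neq0 // size_polyXn addnS.
Qed.

Lemma keyL (U V W : {poly rat}) (u v j : int) :
  U`_0 != 0 -> V`_0 != 0 -> u < v -> (size V)%:Z + v < (size U)%:Z + u ->
  (2 <= size U)%N -> NF (toQt U * T ^ u + toQt V * T ^ v) j W -> size W = 1%N -> False.
Proof.
move=> hU hV ltuv hs hU2 hW sW.
have [e Ee] : exists e : nat, v = u + e%:Z /\ (0 < e)%N.
  by exists `|v - u|%N; split; lia.
have [e0 Ev] := (Ee.2, Ee.1).
have E : toQt U * T ^ u + toQt V * T ^ v = toQt (U + V * 'X^e) * T ^ u.
  rewrite Ev TzD toQtD toQtM toQtXn mulrDl -exprnP; congr (_ + _).
  by rewrite mulrA mulrAC.
have hN : NF (toQt U * T ^ u + toQt V * T ^ v) u (U + V * 'X^e).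
  by split; rewrite ?E // coefD coefMXn e0 addr0.
have [_ eW] := NF_uniq hN hW.
have V0 := NF_neq0 hV.
have hlt : (size (V * 'X^e)%R < size U)%N.
  rewrite size_mulXn' //; move: hs; rewrite Ev; move: (size V) => a; move: (size U) => b; lia.
move: sW; rewrite -eW size_addl // => sU; move: hU2; rewrite sU.
by [].
Qed.

Lemma half_int (z : int) : exists k : int, 2 * k = z \/ 2 * k = z - 1.
Proof. exists (z %/ 2)%Z. lia. Qed.

Lemma det_B g1 g2 : \det (Bmat g1 g2) = g1 * bar g1 + Phi * (g2 * bar g2).
Proof. by rewrite det2 !mxE /= mulrN opprK; congr (_ + _); exact: mulrCA. Qed.

Definition Phip : {poly rat} := 'X^2 + ('X + 1).

Lemma size_Phip : size Phip = 3%N.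
Proof.
have h : size ('X + 1 : {poly rat}) = 2%N by rewrite -polyC1 size_XaddC.
by rewrite /Phip size_addl ?size_polyXn // h.
Qed.

Lemma coef0_Phip : Phip`_0 = 1.
Proof. by rewrite /Phip !coefD coefXn coefX coef1 /= add0r. Qed.

Lemma prod_rev {P : {poly rat}} : P`_0 != 0 ->
  (P * revp P)`_0 != 0 /\ size (P * revp P) = (size P + size P).-1.
Proof.
move=> h0; have P0 := NF_neq0 h0.
have r0 : revp P != 0 by rewrite -size_poly_eq0 size_revp // size_poly_eq0.
split; first by rewrite coef0M revp0 // mulf_neq0 // lead_coef_eq0.
by rewrite size_mul // size_revp.
Qed.

Lemma Phi_prod {P : {poly rat}} : P`_0 != 0 ->
  (Phip * (P * revp P))`_0 != 0 /\ size (Phip * (P * revp P)) = (size P + size P).+1.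
Proof.
move=> h0; have [c0 s] := prod_rev h0.
have P0 := NF_neq0 h0.
have Pr0 : P * revp P != 0 by apply: contraNneq c0 => ->; rewrite coef0.
have Ph0 : Phip != 0 by rewrite -size_poly_eq0 size_Phip.
split; first by rewrite coef0M coef0_Phip mul1r.
rewrite size_mul // size_Phip s.
have : (0 < size P)%N by rewrite lt0n size_poly_eq0.
by move: (size P) => a; lia.
Qed.

Lemma width_rel {g1 g2 m2 P2 j W} : laurent g1 ->
  NF g2 m2 P2 -> NF (g1 * bar g1 + Phi * (g2 * bar g2)) j W -> size W = 1%N ->
  exists m1 P1, NF g1 m1 P1 /\ size P1 = (size P2).+1.
Proof.
move=> hl hP2 hW sW.
have h20 := hP2.2.
have [c2 s2] := Phi_prod h20.
have s2p : (0 < size P2)%N by rewrite lt0n size_poly_eq0 (NF_neq0 h20).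
have e2 : Phi * (g2 * bar g2) =
    toQt (Phip * (P2 * revp P2)) * T ^ (-1 - ((size P2).-1)%:Z).
  by rewrite (NF_gbarg hP2) Phi_E mulrACA -toQtM -TzD.
case: (eqVneq g1 0) => [g10|g10].
  exfalso; move: hW; rewrite g10 mul0r add0r e2 => hW.
  have hN : NF (toQt (Phip * (P2 * revp P2)) * T ^ (-1 - ((size P2).-1)%:Z))
      (-1 - ((size P2).-1)%:Z) (Phip * (P2 * revp P2)) by [].
  have [_ eW] := NF_uniq hN hW.
  move: sW; rewrite -eW s2 => -[]; move: s2p; move: (size P2) => a; lia.
have [m1 [P1 hP1]] := laurent_NF hl g10.
exists m1, P1; split => //.
have h10 := hP1.2.
have [c1 s1] := prod_rev h10.
have s1p : (0 < size P1)%N by rewrite lt0n size_poly_eq0 (NF_neq0 h10).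
move: hW; rewrite (NF_gbarg hP1) e2 => hW.
have [lt|gt|//] := ltngtP (size P1) (size P2).+1.
- exfalso; rewrite addrC in hW.
  apply: (keyL _ _ _ _ _ _ c2 c1 _ _ _ hW sW).
  + move: s1p s2p lt; move: (size P1) => a; move: (size P2) => b; lia.
  + rewrite s1 s2; move: s1p s2p lt; move: (size P1) => a; move: (size P2) => b; lia.
  + rewrite s2; lia.
- exfalso; apply: (keyL _ _ _ _ _ _ c1 c2 _ _ _ hW sW).
  + move: s1p s2p gt; move: (size P1) => a; move: (size P2) => b; lia.
  + rewrite s1 s2; move: s1p s2p gt; move: (size P1) => a; move: (size P2) => b; lia.
  + rewrite s1; move: s1p s2p gt; move: (size P1) => a; move: (size P2) => b; lia.
Qed.

Theorem lemma4p14 (g1 g2 : Qt) :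
  laurent g1 -> laurent g2 -> g2 != 0 -> GL2L (Bmat g1 g2) ->
  exists! M : 'M[Qt]_2,
    (exists k : int, M = Bmat g1 g2 *m g0 ^ k) /\ balanced M.
Proof.
move=> hl1 hl2 g20 [hent [hunit hinv]].
have hdet : \det (Bmat g1 g2) * \det (invmx (Bmat g1 g2)) = 1.
  by rewrite det_inv mulfV // -unitfE -unitmxE.
have [j [W [hW sW]]] := unit_NF (laurent_det hent) (laurent_det hinv) hdet.
have [m2 [P2 hP2]] := laurent_NF hl2 g20.
rewrite det_B in hW.
have [m1 [P1 [hP1 sP]]] := width_rel hl1 hP2 hW sW.
have N00 : forall k, NF ((Bmat g1 g2 *m g0 ^ k) 0 0) (m1 + k) P1.
  move=> k; rewrite Mk00 mxE /=; case: hP1 => -> h; split => //.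
  by rewrite -mulrA -TzD.
have N01 : forall k, NF ((Bmat g1 g2 *m g0 ^ k) 0 1) (m2 - k) P2.
  move=> k; rewrite Mk01 mxE /=; case: hP2 => -> h; split => //.
  by rewrite -mulrA -TzD.
have s2p : (0 < size P2)%N by rewrite lt0n size_poly_eq0 (NF_neq0 hP2.2).
have bal1 : forall k, balanced (Bmat g1 g2 *m g0 ^ k) ->
    2 * k = m2 - m1 \/ 2 * k = m2 - m1 - 1.
  move=> k [[a [b [c [d [h1 h2 e1 e2]]]]]|[a [b [c [d [h1 h2 e1 e2]]]]]].
  + have [ea eb] := lspan_char (N00 k) h1; have [ec ed] := lspan_char (N01 k) h2.
    move: e1 e2 ea eb ec ed; rewrite sP; move: s2p; move: (size P2) => s; lia.
  + have [ea eb] := lspan_char (N00 k) h1; have [ec ed] := lspan_char (N01 k) h2.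
    move: e1 e2 ea eb ec ed; rewrite sP; move: s2p; move: (size P2) => s; lia.
have bal2 : forall k, 2 * k = m2 - m1 \/ 2 * k = m2 - m1 - 1 ->
    balanced (Bmat g1 g2 *m g0 ^ k).
  move=> k [hk|hk].
  + left; exists (m1 + k), (m1 + k + ((size P1).-1)%:Z), (m2 - k), (m2 - k + ((size P2).-1)%:Z).
    split; [exact: NF_lspan (N00 k) | exact: NF_lspan (N01 k) | lia |].
    rewrite sP; move: s2p; move: (size P2) => s; lia.
  + right; exists (m1 + k), (m1 + k + ((size P1).-1)%:Z), (m2 - k), (m2 - k + ((size P2).-1)%:Z).
    split; [exact: NF_lspan (N00 k) | exact: NF_lspan (N01 k) | lia |].
    rewrite sP; move: s2p; move: (size P2) => s; lia.
have [k hk] := half_int (m2 - m1).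
exists (Bmat g1 g2 *m g0 ^ k); split.
  by split; [exists k | exact: bal2].
move=> M [[k' ->] hb].
have hk' := bal1 k' hb.
have -> : k' = k by lia.
by [].
Qed.
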